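(* Suppose there is a finite set $C$ and a function $c:\mathcal Y\to C$ such that, for every $(a,b)\in\mathbf K$ and $y\in\mathcal Y_b$, $g(a,b,y)=h(a,b,c(y))$ for some function $h:\mathbf K\times C\to\{0,\dots,N-1\}$. For $b\in S^B$ and $\kappa\in C$, let $F_{b,\kappa}=\sum_{y\in\mathcal Y_b,\,c(y)=\kappa}P^B_y$ be the coarse-grained POVM elements. Let $\hat B$ be a register with orthonormal basis $\{|\kappa\rangle\}_{\kappa\in C}$. Define $$\hat K^B_b=\sum_{\kappa\in C}\sqrt{F_{b,\kappa}}\otimes|b\rangle_{\tilde B}\otimes|\kappa\rangle_{\hat B},\qquad \hat V=\sum_{(a,b)\in\mathbf K,\ \kappa\in C}|h(a,b,\kappa)\rangle_R\otimes|a\rangle\langle a|_{\tilde A}\otimes|b\rangle\langle b|_{\tilde B}\otimes|\kappa\rangle\langle\kappa|_{\hat B},$$ and $$\hat{\mathcal G}(\sigma)=\hat V\Pi\Big(\sum_{a,b}(K^A_a\otimes\hat K^B_b)\sigma(K^A_a\otimes\hat K^B_b)^\dagger\Big)\Pi\hat V^\dagger.$$ Then for every density operator $\rho_{AB}$ on $H_A\otimes H_B$, $$D\big(\mathcal G(\rho_{AB})\,\|\,\mathcal Z[\mathcal G(\rho_{AB})]\big)=D\big(\hat{\mathcal G}(\rho_{AB})\,\|\,\mathcal Z[\hat{\mathcal G}(\rho_{AB})]\big).$$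
   Context: Setting (reverse-reconciliation postprocessing). Registers and measurements. $H_A,H_B$ are finite-dimensional Hilbert spaces. Alice has a POVM $\{P^A_x\}_{x\in\mathcal X}$ on $H_A$, and Bob has a POVM $\{P^B_y\}_{y\in\mathcal Y}$ on $H_B$. Alice's announcement set $S^A$ gives a partition $\mathcal X=\bigcup_{a\in S^A}\mathcal X_a$ with $|\mathcal X_a|=\omega_A$ for all $a$. Bob's announcement set $S^B$ gives a partition $\mathcal Y=\bigcup_{b\in S^B}\mathcal Y_b$ with $|\mathcal Y_b|=\omega_B$ for all $b$. Fix bijections $f_a:\Omega^A=\{1,\dots,\omega_A\}\to\mathcal X_a$ and $f_b:\Omega^B=\{1,\dots,\omega_B\}\to\mathcal Y_b$. The registers $\tilde A,\tilde B,\bar A,\bar B$ have orthonormal bases $\{|a\rangle\}_{a\in S^A}$, $\{|b\rangle\}_{b\in S^B}$, $\{|\alpha\rangle\}_{\alpha\in\Omega^A}$ and $\{|\beta\rangle\}_{\beta\in\Omega^B}$ respectively. Announcement map. Define $$K^A_a=\sum_{\alpha\in\Omega^A}\sqrt{P^A_{f_a(\alpha)}}\otimes|a\rangle_{\tilde A}\otimes|\alpha\rangle_{\bar A},\qquad K^B_b=\sum_{\beta\in\Omega^B}\sqrt{P^B_{f_b(\beta)}}\otimes|b\rangle_{\tilde B}\otimes|\beta\rangle_{\bar B},$$ and $\mathcal A(\sigma)=\sum_{a\in S^A,b\in S^B}(K^A_a\otimes K^B_b)\sigma(K^A_a\otimes K^B_b)^\dagger$. Sifting. Fix a subset $\mathbf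 K\subseteq S^A\times S^B$ of kept announcements and let $\Pi=\sum_{(a,b)\in\mathbf K}|a\rangle\langle a|_{\tilde A}\otimes|b\rangle\langle b|_{\tilde B}$. Key map. Fix a key map $g:\mathbf K\times\mathcal Y\to\{0,\dots,N-1\}$. The register $R$ has orthonormal basis $\{|j\rangle\}_{j=0}^{N-1}$. Define $$V=\sum_{(a,b)\in\mathbf K,\ \beta\in\Omega^B}|g(a,b,f_b(\beta))\rangle_R\otimes|a\rangle\langle a|_{\tilde A}\otimes|b\rangle\langle b|_{\tilde B}\otimes|\beta\rangle\langle\beta|_{\bar B}.$$ Maps. $\mathcal G(\sigma)=V\Pi\mathcal A(\sigma)\Pi V^\dagger$, and $\mathcal Z(\sigma)=\sum_{j=0}^{N-1}(|j\rangle\langle j|_R\otimes\mathbb 1)\sigma(|j\rangle\langle j|_R\otimes\mathbb 1)$. Relative entropy. $D(\rho\|\sigma)=\operatorname{Tr}(\rho\log_2\rho)-\operatorname{Tr}(\rho\log_2\sigma)$, used also for subnormalized positive operators. *)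

(* Defs.v *)
From Stdlib Require Import Reals ClassicalEpsilon.
From mathcomp Require Import all_boot.

Set Implicit Arguments.
Unset Strict Implicit.
Unset Printing Implicit Defensive.

Record C := mkC { Cre : R ; Cim : R }.

Definition C0 : C := mkC R0 R0.
Definition C1 : C := mkC R1 R0.
Definition RtoC (r : R) : C := mkC r R0.
Definition Cadd (x y : C) : C := mkC (Rplus (Cre x) (Cre y)) (Rplus (Cim x) (Cim y)).
Definition Cmul (x y : C) : C :=
  mkC (Rminus (Rmult (Cre x) (Cre y)) (Rmult (Cim x) (Cim y)))
      (Rplus (Rmult (Cre x) (Cim y)) (Rmult (Cim x) (Cre y))).
Definition Cconj (x : C) : C := mkC (Cre x) (Ropp (Cim x)).
Definition Cb (b : bool) : C := if b then C1 else C0.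

(* Operators: a linear map from C^J to C^I is a matrix I -> J -> C.    *)
Definition op (I J : finType) := I -> J -> C.

Definition opmul (I J K : finType) (A : op I J) (B : op J K) : op I K :=
  fun i k => \big[Cadd/C0]_(j : J) Cmul (A i j) (B j k).
Definition adj (I J : finType) (A : op I J) : op J I := fun j i => Cconj (A i j).
Definition idop (I : finType) : op I I := fun i j => Cb (i == j).
Definition zeroop (I J : finType) : op I J := fun _ _ => C0.
Definition opsum (T I J : finType) (F : T -> op I J) : op I J :=
  fun i j => \big[Cadd/C0]_(t : T) F t i j.
Definition tr (I : finType) (A : op I I) : C := \big[Cadd/C0]_(i : I) A i i.
Definition tensor (I1 J1 I2 J2 : finType) (A : op I1 J1) (B : op I2 J2)
  : op (I1 * I2)%type (J1 * J2)%type := fun i j => Cmul (A i.1 j.1) (B i.2 j.2).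
Definition conjop (I J : finType) (A : op I J) (s : op J J) : op I I :=
  opmul (opmul A s) (adj A).

Definition psd (I : finType) (A : op I I) : Prop :=
  forall v : I -> C,
    let q := \big[Cadd/C0]_(i : I) \big[Cadd/C0]_(j : I)
               Cmul (Cconj (v i)) (Cmul (A i j) (v j)) in
    Cim q = R0 /\ Rle R0 (Cre q).
Definition density (I : finType) (rho : op I I) : Prop := psd rho /\ tr rho = C1.
Definition povm (X I : finType) (P : X -> op I I) : Prop :=
  (forall x, psd (P x)) /\ opsum P = @idop I.

Definition unitary (I : finType) (U : op I I) : Prop := opmul (adj U) U = @idop I.
Definition diagop (I : finType) (d : I -> R) : op I I :=
  fun i j => if i == j then RtoC (d i) else C0.
Definition fcalc_rel (I : finType) (f : R -> R) (A B : op I I) : Prop :=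
  exists (U : op I I) (d : I -> R), unitary U /\
    A = conjop U (diagop d) /\ B = conjop U (diagop (fun i => f (d i))).
Definition fcalc (I : finType) (f : R -> R) (A : op I I) : op I I :=
  epsilon (inhabits (@zeroop I I)) (fcalc_rel f A).

Definition msqrt (I : finType) (A : op I I) : op I I := fcalc sqrt A.
(* log base 2, taken on the support (log2 0 := 0) *)
Definition Rlog2 (x : R) : R :=
  if Rlt_dec R0 x then Rdiv (ln x) (ln (IZR 2%Z)) else R0.
Definition mlog2 (I : finType) (A : op I I) : op I I := fcalc Rlog2 A.

Definition relent (I : finType) (rho sigma : op I I) : R :=
  Rminus (Cre (tr (opmul rho (mlog2 rho)))) (Cre (tr (opmul rho (mlog2 sigma)))).

(* Kraus operator  sum_w sqrt(Q s w) (x) |s> (x) |w>  : H -> H (x) S (x) W *)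
Definition kraus (H S W : finType) (Q : S -> W -> op H H) (s : S)
  : op (H * S * W)%type H :=
  fun o j => if o.1.2 == s then msqrt (Q s o.2) o.1.1 j else C0.

Definition annMap (HA SA WA HB SB WB : finType)
  (QA : SA -> WA -> op HA HA) (QB : SB -> WB -> op HB HB)
  (sigma : op (HA * HB)%type (HA * HB)%type)
  : op ((HA * SA * WA) * (HB * SB * WB))%type ((HA * SA * WA) * (HB * SB * WB))%type :=
  opsum (fun ab : (SA * SB)%type =>
           conjop (tensor (kraus QA ab.1) (kraus QB ab.2)) sigma).

Definition siftProj (HA SA WA HB SB WB : finType) (Kp : pred (SA * SB)%type)
  : op ((HA * SA * WA) * (HB * SB * WB))%type ((HA * SA * WA) * (HB * SB * WB))%type :=
  fun o o' => Cb ((o == o') && Kp (o.1.1.2, o.2.1.2)).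

(* key map  V = sum_{(a,b) in K, w} |key a b w>_R (x) |a><a| (x) |b><b| (x) |w><w| *)
Definition keyIso (HA SA WA HB SB WB : finType) (N : nat) (Kp : pred (SA * SB)%type)
  (key : SA -> SB -> WB -> 'I_N)
  : op ('I_N * ((HA * SA * WA) * (HB * SB * WB)))%type ((HA * SA * WA) * (HB * SB * WB))%type :=
  fun ro o' =>
    let a := o'.1.1.2 in let b := o'.2.1.2 in let w := o'.2.2 in
    Cb [&& ro.2 == o', Kp (a, b) & ro.1 == key a b w].

Definition Gmap (HA SA WA HB SB WB : finType) (N : nat)
  (QA : SA -> WA -> op HA HA) (QB : SB -> WB -> op HB HB)
  (Kp : pred (SA * SB)%type) (key : SA -> SB -> WB -> 'I_N)
  (sigma : op (HA * HB)%type (HA * HB)%type) :=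
  conjop (@keyIso HA SA WA HB SB WB N Kp key)
         (conjop (@siftProj HA SA WA HB SB WB Kp) (annMap QA QB sigma)).

Definition Zmap (N : nat) (O : finType) (sigma : op ('I_N * O)%type ('I_N * O)%type)
  : op ('I_N * O)%type ('I_N * O)%type :=
  fun r r' => if r.1 == r'.1 then sigma r r' else C0.

Definition block (S W Y : finType) (f : S -> W -> Y) (s : S) : {set Y} :=
  [set f s w | w : W].

Definition coarse (Y SB Cs HB : finType) (nB : nat)
  (fB : SB -> 'I_nB -> Y) (PB : Y -> op HB HB) (c : Y -> Cs) (b : SB) (k : Cs)
  : op HB HB :=
  fun i j => \big[Cadd/C0]_(y | (y \in block fB b) && (c y == k)) PB y i j.

(* Main.v *)
Require Import Defs.
From Stdlib Require Import Reals FunctionalExtensionality ClassicalEpsilon.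
From mathcomp Require Import all_boot all_algebra.
From mathcomp Require Import Rstruct complex spectral sesquilinear ring lra.

Module Helpers.
Import GRing.Theory Num.Theory Num.Def.
Local Open Scope ring_scope.
Local Open Scope sesquilinear_scope.
Set Implicit Arguments.
Unset Strict Implicit.
Unset Printing Implicit Defensive.

Notation K := (R[i]).
Definition phi (x : Defs.C) : K := Complex (Cre x) (Cim x).
Lemma phi_add x y : phi (Cadd x y) = phi x + phi y. Proof. by case: x; case: y. Qed.
Lemma phi_mul x y : phi (Cmul x y) = phi x * phi y. Proof. by case: x; case: y. Qed.
Lemma phi_conj x : phi (Cconj x) = (phi x)^*. Proof. by case: x. Qed.
Lemma phi0 : phi Defs.C0 = 0. Proof. by []. Qed.
Lemma phi1 : phi Defs.C1 = 1. Proof. by []. Qed.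
Lemma phiR r : phi (RtoC r) = r%:C%C. Proof. by []. Qed.
Lemma phiCb b : phi (Cb b) = b%:R. Proof. by case: b. Qed.
Definition psi (z : K) : Defs.C := mkC (complex.Re z) (complex.Im z).
Lemma phiK z : phi (psi z) = z. Proof. by case: z. Qed.
Lemma phi_inj : injective phi.
Proof. by move=> [a b] [c d] [-> ->]. Qed.
Lemma phi_big (T : Type) (r : seq T) (P : pred T) (F : T -> Defs.C) :
  phi (\big[Cadd/Defs.C0]_(i <- r | P i) F i) = \sum_(i <- r | P i) phi (F i).
Proof. exact: (big_morph phi phi_add phi0). Qed.

Definition kop (I J : finType) := I -> J -> K.
Definition Phi (I J : finType) (A : op I J) : kop I J := fun i j => phi (A i j).
Definition kmul (I J L : finType) (A : kop I J) (B : kop J L) : kop I L :=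
  fun i k => \sum_j A i j * B j k.
Definition kadj (I J : finType) (A : kop I J) : kop J I := fun j i => (A i j)^*.
Definition kid (I : finType) : kop I I := fun i j => (i == j)%:R.
Definition ktr (I : finType) (A : kop I I) : K := \sum_i A i i.
Definition kdiag (I : finType) (d : I -> R) : kop I I :=
  fun i j => if i == j then (d i)%:C%C else 0.
Definition kconj (I J : finType) (A : kop I J) (X : kop J J) : kop I I :=
  kmul (kmul A X) (kadj A).
Definition ksum (T I J : finType) (F : T -> kop I J) : kop I J :=
  fun i j => \sum_t F t i j.
Definition kzero (I J : finType) : kop I J := fun _ _ => 0.

Lemma kopP (I J : finType) (A B : kop I J) : (forall i j, A i j = B i j) -> A = B.
Proof. move=> H; apply: functional_extensionality => i; apply: functional_extensionality => j; exact: H. Qed.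

Section KopLemmas.
Variables I J L M : finType.

Lemma kmulA (A : kop I J) (B : kop J L) (Cm : kop L M) :
  kmul (kmul A B) Cm = kmul A (kmul B Cm).
Proof.
apply: kopP => i l; rewrite /kmul.
under eq_bigr do rewrite mulr_suml.
rewrite exchange_big /=; apply: eq_bigr => j _; rewrite mulr_sumr.
by apply: eq_bigr => k _; rewrite mulrA.
Qed.

Lemma kmul1 (A : kop I J) : kmul A (@kid J) = A.
Proof.
apply: kopP => i j; rewrite /kmul /kid (bigD1 j) //= eqxx mulr1 big1 ?addr0 //.
by move=> k /negbTE ->; rewrite mulr0.
Qed.

Lemma kmul1l (A : kop I J) : kmul (@kid I) A = A.
Proof.
apply: kopP => i j; rewrite /kmul /kid (bigD1 i) //= eqxx mul1r big1 ?addr0 //.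
by move=> k; rewrite eq_sym => /negbTE ->; rewrite mul0r.
Qed.

Lemma kadjK (A : kop I J) : kadj (kadj A) = A.
Proof. by apply: kopP => i j; rewrite /kadj conjCK. Qed.

Lemma kadj_mul (A : kop I J) (B : kop J L) : kadj (kmul A B) = kmul (kadj B) (kadj A).
Proof.
apply: kopP => l i; rewrite /kadj /kmul rmorph_sum; apply: eq_bigr => j _.
by rewrite rmorphM mulrC.
Qed.

Lemma ktrC (A : kop I J) (B : kop J I) : ktr (kmul A B) = ktr (kmul B A).
Proof.
rewrite /ktr /kmul exchange_big; apply: eq_bigr => j _; apply: eq_bigr => i _.
by rewrite mulrC.
Qed.

Lemma kmul_suml (T : finType) (F : T -> kop I J) (B : kop J L) :
  kmul (ksum F) B = ksum (fun t => kmul (F t) B).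
Proof.
apply: kopP => i k; rewrite /kmul /ksum.
under eq_bigr do rewrite mulr_suml.
by rewrite exchange_big.
Qed.

Lemma kmul_sumr (T : finType) (A : kop I J) (F : T -> kop J L) :
  kmul A (ksum F) = ksum (fun t => kmul A (F t)).
Proof.
apply: kopP => i k; rewrite /kmul /ksum.
under eq_bigr do rewrite mulr_sumr.
by rewrite exchange_big.
Qed.

Lemma kadj_sum (T : finType) (F : T -> kop I J) : kadj (ksum F) = ksum (fun t => kadj (F t)).
Proof. by apply: kopP => j i; rewrite /kadj /ksum rmorph_sum. Qed.

Lemma ktr_sum (T : finType) (F : T -> kop I I) : ktr (ksum F) = \sum_t ktr (F t).
Proof. by rewrite /ktr /ksum exchange_big. Qed.

End KopLemmas.

Section KopLemmas2.
Variables I J L M : finType.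
Lemma kconj_sum (T : finType) (A : kop I J) (F : T -> kop J J) :
  kconj A (ksum F) = ksum (fun t => kconj A (F t)).
Proof. by rewrite /kconj kmul_sumr kmul_suml. Qed.

Lemma kconj_conj (A : kop I J) (B : kop J L) (X : kop L L) :
  kconj A (kconj B X) = kconj (kmul A B) X.
Proof. by rewrite /kconj kadj_mul !kmulA. Qed.

End KopLemmas2.

Section Bridge.
Variables I J L : finType.
Lemma Phi_mul (A : op I J) (B : op J L) : Phi (opmul A B) = kmul (Phi A) (Phi B).
Proof. apply: kopP => i k; rewrite /Phi /opmul phi_big; apply: eq_bigr => j _; exact: phi_mul. Qed.
Lemma Phi_adj (A : op I J) : Phi (adj A) = kadj (Phi A).
Proof. by apply: kopP => i j; rewrite /Phi /adj phi_conj. Qed.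
Lemma Phi_id : Phi (@idop I) = @kid I.
Proof. by apply: kopP => i j; rewrite /Phi /idop phiCb. Qed.
Lemma Phi_sum (T : finType) (F : T -> op I J) : Phi (opsum F) = ksum (fun t => Phi (F t)).
Proof. by apply: kopP => i j; rewrite /Phi /opsum phi_big. Qed.
Lemma phi_tr (A : op I I) : phi (tr A) = ktr (Phi A).
Proof. by rewrite /tr phi_big. Qed.
Lemma Phi_diag (d : I -> R) : Phi (diagop d) = kdiag d.
Proof. by apply: kopP => i j; rewrite /Phi /diagop /kdiag; case: eqP. Qed.
Lemma Phi_inj (A B : op I J) : Phi A = Phi B -> A = B.
Proof.
move=> H; apply: functional_extensionality => i; apply: functional_extensionality => j.
by apply: phi_inj; have := congr1 (fun F => F i j) H.
Qed.
End Bridge.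
Lemma Phi_conj (I J : finType) (A : op I J) (X : op J J) : Phi (conjop A X) = kconj (Phi A) (Phi X).
Proof. by rewrite /conjop /kconj !Phi_mul Phi_adj. Qed.


Definition toM (I J : finType) (A : kop I J) : 'M[K]_(#|I|, #|J|) :=
  \matrix_(i, j) A (enum_val i) (enum_val j).
Definition fromM (I J : finType) (M : 'M[K]_(#|I|, #|J|)) : kop I J :=
  fun i j => M (enum_rank i) (enum_rank j).

Lemma sum_enum (I : finType) (F : I -> K) : \sum_(i : I) F i = \sum_(k < #|I|) F (enum_val k).
Proof. by rewrite -big_enum_val. Qed.

Lemma toMK (I J : finType) (A : kop I J) : fromM (toM A) = A.
Proof. by apply: kopP => i j; rewrite /fromM /toM mxE !enum_rankK. Qed.
Lemma fromMK (I J : finType) (M : 'M[K]_(#|I|, #|J|)) : toM (fromM M) = M.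
Proof. by apply/matrixP => i j; rewrite /fromM /toM mxE !enum_valK. Qed.
Lemma toM_mul (I J L : finType) (A : kop I J) (B : kop J L) : toM (kmul A B) = toM A *m toM B.
Proof.
apply/matrixP => i k; rewrite /toM !mxE /kmul sum_enum; apply: eq_bigr => j _.
by rewrite !mxE.
Qed.
Lemma toM_id (I : finType) : toM (@kid I) = 1%:M.
Proof.
apply/matrixP => i j; rewrite /toM !mxE /kid.
by rewrite (inj_eq enum_val_inj).
Qed.
Lemma toM_adj (I J : finType) (A : kop I J) : toM (kadj A) = (toM A)^t conjC.
Proof. by apply/matrixP => i j; rewrite /toM !mxE. Qed.
Lemma toM_inj (I J : finType) (A B : kop I J) : toM A = toM B -> A = B.
Proof. by move=> H; rewrite -(toMK A) H toMK. Qed.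

Lemma unitary_sym (I : finType) (U : kop I I) :
  kmul (kadj U) U = @kid I -> kmul U (kadj U) = @kid I.
Proof.
move=> H; apply: toM_inj; move: (congr1 (@toM I I) H).
rewrite !toM_mul toM_id; exact: mulmx1C.
Qed.

Lemma real_Re (z : K) : z \is Num.real -> ((complex.Re z)%:C)%C = z.
Proof.
rewrite CrealE; case: z => a b /eqP [] /= Hb.
suff -> : b = 0 by [].
by apply/eqP; rewrite -eqNr Hb.
Qed.

Lemma kspectral (I : finType) (X : kop I I) : kadj X = X ->
  exists (U : kop I I) (d : I -> R), kmul (kadj U) U = @kid I /\ X = kconj U (kdiag d).
Proof.
move=> HX.
set M := toM X.
have Mh : M \is hermsymmx.
  by rewrite is_hermitianmxE expr0 scale1r /M -toM_adj HX.
have Mn := hermitian_normalmx Mh.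
have Hsp := hermitian_spectral_diag_real Mh.
move: Mn => /orthomx_spectralP.
set P := spectralmx M; set sp := spectral_diag M => HM.
have Pu : P \is unitarymx by exact: spectral_unitarymx.
rewrite invmx_unitary // in HM.
exists (fromM (P ^t*)), (fun i => complex.Re (sp 0 (enum_rank i))); split.
  apply: toM_inj; rewrite toM_mul toM_adj fromMK trmxCK toM_id.
  by apply/unitarymxP.
apply: toM_inj; rewrite /kconj !toM_mul toM_adj fromMK trmxCK -/M HM.
congr (_ *m _ *m _); apply/matrixP => i j; rewrite /toM !mxE /kdiag.
rewrite (inj_eq enum_val_inj) enum_valK.
case: eqP => [->|]; last by rewrite mulr0n.
rewrite mulr1n real_Re //.
by move/mxOverP: Hsp; apply.
Qed.

Fixpoint kpow (I : finType) (X : kop I I) (n : nat) : kop I I :=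
  if n is n'.+1 then kmul (kpow X n') X else @kid I.
Definition kscale (I J : finType) (c : K) (A : kop I J) : kop I J := fun i j => c * A i j.
Definition kpoly (I : finType) (p : {poly R}) (X : kop I I) : kop I I :=
  ksum (fun k : 'I_(size p) => kscale ((p`_k)%:C)%C (kpow X k)).

Lemma kdiag_mul (I : finType) (a b : I -> R) :
  kmul (kdiag a) (kdiag b) = kdiag (fun i => a i * b i).
Proof.
apply: kopP => i j; rewrite /kmul /kdiag (bigD1 i) //= eqxx big1 ?addr0.
  by case: eqP => [->|]; rewrite ?mulr0 // rmorphM.
by move=> k /negbTE; rewrite eq_sym => ->; rewrite mul0r.
Qed.

Lemma kdiag1 (I : finType) : kdiag (fun _ : I => 1) = @kid I.
Proof. by apply: kopP => i j; rewrite /kdiag /kid; case: eqP. Qed.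

Lemma kconj_mul_diag (I : finType) (U : kop I I) (a b : I -> R) :
  kmul (kadj U) U = @kid I ->
  kmul (kconj U (kdiag a)) (kconj U (kdiag b)) = kconj U (kdiag (fun i => a i * b i)).
Proof.
move=> HU; rewrite /kconj !kmulA -[kmul (kadj U) (kmul U _)]kmulA HU kmul1l.
by rewrite -[kmul (kdiag a) (kmul _ _)]kmulA kdiag_mul.
Qed.

Lemma kpow_diag (I : finType) (U : kop I I) (d : I -> R) n :
  kmul (kadj U) U = @kid I ->
  kpow (kconj U (kdiag d)) n = kconj U (kdiag (fun i => d i ^+ n)).
Proof.
move=> HU; elim: n => [|n IH] /=.
  by rewrite kdiag1 /kconj kmul1 (unitary_sym HU).
rewrite IH kconj_mul_diag //; congr (kconj U (kdiag _)).
by apply: functional_extensionality => i; rewrite exprS mulrC.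
Qed.

Lemma kscale_conj_diag (I : finType) (U : kop I I) (c : R) (a : I -> R) :
  kscale (c%:C)%C (kconj U (kdiag a)) = kconj U (kdiag (fun i => c * a i)).
Proof.
apply: kopP => i j; rewrite /kscale /kconj /kmul mulr_sumr; apply: eq_bigr => k _.
rewrite mulrA; congr (_ * _); rewrite mulr_sumr; apply: eq_bigr => l _.
rewrite /kdiag; case: eqP => _; last by rewrite !mulr0.
by rewrite rmorphM mulrCA.
Qed.

Lemma ksum_conj_diag (I T : finType) (U : kop I I) (a : T -> I -> R) :
  ksum (fun t => kconj U (kdiag (a t))) = kconj U (kdiag (fun i => \sum_t a t i)).
Proof.
rewrite -kconj_sum; congr (kconj U _); apply: kopP => i j.
rewrite /ksum /kdiag; case: eqP => _; last by rewrite big1.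
by rewrite rmorph_sum.
Qed.

Lemma fcalc_poly (I : finType) (U : kop I I) (d : I -> R) (f : R -> R) (p : {poly R}) :
  kmul (kadj U) U = @kid I -> (forall i, p.[d i] = f (d i)) ->
  kconj U (kdiag (fun i => f (d i))) = kpoly p (kconj U (kdiag d)).
Proof.
move=> HU Hp; rewrite /kpoly.
have -> : (fun k : 'I_(size p) => kscale (p`_k)%:C%C (kpow (kconj U (kdiag d)) k))
  = (fun k : 'I_(size p) => kconj U (kdiag (fun i => p`_k * d i ^+ k))).
  by apply: functional_extensionality => k; rewrite kpow_diag // kscale_conj_diag.
rewrite ksum_conj_diag; congr (kconj U (kdiag _)).
by apply: functional_extensionality => i; rewrite -Hp horner_coef.
Qed.

Lemma interp (s : seq R) (f : R -> R) : exists p : {poly R}, forall x, x \in s -> p.[x] = f x.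
Proof.
elim: s => [|y s [p Hp]]; first by exists 0.
have [ys|yns] := boolP (y \in s).
  by exists p => x; rewrite inE => /orP [/eqP ->|]; [exact: Hp | exact: Hp].
set q := \prod_(z <- s) ('X - z%:P).
have qy : q.[y] != 0.
  by rewrite -/(root q y) /q root_prod_XsubC.
exists (p + ((f y - p.[y]) / q.[y]) *: q) => x; rewrite inE => /orP [/eqP ->|xs].
  by rewrite hornerD hornerZ divfK // addrC subrK.
have qx : q.[x] = 0 by apply/eqP; rewrite -/(root q x) /q root_prod_XsubC.
by rewrite hornerD hornerZ qx mulr0 addr0 Hp.
Qed.

Definition kq (I : finType) (A : kop I I) (w : I -> K) : K :=
  \sum_i \sum_j (w i)^* * (A i j * w j).

Lemma psdK (I : finType) (A : op I I) : psd A ->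
  forall w : I -> K, complex.Im (kq (Phi A) w) = 0 /\ 0 <= complex.Re (kq (Phi A) w).
Proof.
move=> H w; have := H (fun i => psi (w i)) => /= [[h1 /RleP h2]].
suff E : phi (\big[Cadd/Defs.C0]_i \big[Cadd/Defs.C0]_j
     Cmul (Cconj (psi (w i))) (Cmul (A i j) (psi (w j)))) = kq (Phi A) w.
  by rewrite -E; split.
rewrite phi_big /kq; apply: eq_bigr => i _; rewrite phi_big; apply: eq_bigr => j _.
by rewrite !phi_mul phi_conj !phiK.
Qed.

Lemma sum2 (I : finType) (i j : I) (a b : K) (Y : I -> K) :
  \sum_l (a * (l == i)%:R + b * (l == j)%:R) * Y l = a * Y i + b * Y j.
Proof.
under eq_bigr do rewrite mulrDl.
rewrite big_split /=; congr (_ + _).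
  rewrite (bigD1 i) //= eqxx mulr1 big1 ?addr0 // => l /negbTE ->.
  by rewrite mulr0 mul0r.
rewrite (bigD1 j) //= eqxx mulr1 big1 ?addr0 // => l /negbTE ->.
by rewrite mulr0 mul0r.
Qed.

Lemma kq2 (I : finType) (A : kop I I) (i j : I) (a b : K) :
  kq A (fun k => a * (k == i)%:R + b * (k == j)%:R) =
  a^* * (a * A i i + b * A i j) + b^* * (a * A j i + b * A j j).
Proof.
rewrite /kq.
under eq_bigr => k _.
  rewrite -mulr_sumr.
  have -> : \sum_j0 A k j0 * (a * (j0 == i)%:R + b * (j0 == j)%:R) = a * A k i + b * A k j.
    by rewrite -sum2; apply: eq_bigr => l _; rewrite mulrC.
  rewrite rmorphD !rmorphM /= !conjC_nat.
  over.
by rewrite sum2.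
Qed.

Lemma psd_herm (I : finType) (A : op I I) : psd A -> kadj (Phi A) = Phi A.
Proof.
move=> H; apply: kopP => i j; rewrite /kadj.
have h := fun a b => (psdK H (fun k => a * (k == j)%:R + b * (k == i)%:R)).1.
move: (h 1 0) (h 1 1) (h 1 'i%C) (h 0 1); rewrite !kq2.
move: (Phi A j j) (Phi A j i) (Phi A i j) (Phi A i i) => [a1 a2] [b1 b2] [c1 c2] [d1 d2] /=.
move=> e1 e2 e3 e4.
congr Complex; lra.
Qed.

Lemma fcalc_spec (I : finType) (f : R -> R) (X : op I I) : kadj (Phi X) = Phi X ->
  exists (U : kop I I) (d : I -> R), kmul (kadj U) U = @kid I /\
    Phi X = kconj U (kdiag d) /\ Phi (fcalc f X) = kconj U (kdiag (fun i => f (d i))).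
Proof.
move=> HX; have [Uk [d [HU HXd]]] := kspectral HX.
set U : op I I := fun i j => psi (Uk i j).
have PU : Phi U = Uk by apply: kopP => i j; rewrite /Phi /U phiK.
have ex : exists B, fcalc_rel f X B.
  exists (conjop U (diagop (fun i => f (d i)))), U, d; split; [|split].
  - by apply: Phi_inj; rewrite Phi_mul Phi_adj Phi_id PU.
  - by apply: Phi_inj; rewrite Phi_conj Phi_diag PU.
  - by [].
have := epsilon_spec (inhabits (@zeroop I I)) (fcalc_rel f X) ex.
rewrite -/(fcalc f X) => [[U' [d' [HU' [HX' HB']]]]].
exists (Phi U'), d'; split; [|split].
- by rewrite -Phi_adj -Phi_mul HU' Phi_id.
- by rewrite HX' Phi_conj Phi_diag.
- by rewrite HB' Phi_conj Phi_diag.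
Qed.

Lemma kq_conj (I : finType) (U : kop I I) (X : kop I I) k :
  kq X (fun i => U i k) = kmul (kmul (kadj U) X) U k k.
Proof.
rewrite /kq /kmul; under [RHS]eq_bigr do rewrite mulr_suml.
rewrite exchange_big /=; apply: eq_bigr => i _; apply: eq_bigr => j _.
by rewrite mulrA.
Qed.

Lemma psd_diag_ge0 (I : finType) (P : op I I) (U : kop I I) (d : I -> R) :
  psd P -> kmul (kadj U) U = @kid I -> Phi P = kconj U (kdiag d) -> forall k, 0 <= d k.
Proof.
move=> HP HU HPd k; have [_ ] := psdK HP (fun i => U i k).
rewrite kq_conj HPd /kconj -!kmulA HU kmul1l kmulA HU kmul1 /kdiag eqxx.
by [].
Qed.

Lemma kadj_diag (I : finType) (d : I -> R) : kadj (kdiag d) = kdiag d.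
Proof.
apply: kopP => i j; rewrite /kadj /kdiag eq_sym; case: eqP => [->|]; last by rewrite conjC0.
exact: (conjc_real (d j)).
Qed.

Lemma kadj_conj (I J : finType) (U : kop I J) (S : kop J J) :
  kadj (kconj U S) = kconj U (kadj S).
Proof. by rewrite /kconj !kadj_mul kadjK kmulA. Qed.

Lemma msqrt_sq (I : finType) (P : op I I) : psd P ->
  kmul (kadj (Phi (msqrt P))) (Phi (msqrt P)) = Phi P.
Proof.
move=> HP; have [U [d [HU [HPd HS]]]] := fcalc_spec sqrt (psd_herm HP).
have d0 := psd_diag_ge0 HP HU HPd.
rewrite /msqrt HS kadj_conj kadj_diag kconj_mul_diag // HPd.
congr (kconj U (kdiag _)); apply: functional_extensionality => i.
by apply: sqrt_sqrt; apply/RleP.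
Qed.

Lemma sum_pair (A B : finType) (F : (A * B)%type -> K) :
  \sum_p F p = \sum_a \sum_b F (a, b).
Proof. by rewrite pair_bigA; apply: eq_bigr => -[a b]. Qed.

Lemma sum_pick (A : finType) (a0 : A) (F : A -> K) :
  \sum_a (a == a0)%:R * F a = F a0.
Proof.
rewrite (bigD1 a0) //= eqxx mul1r big1 ?addr0 // => a /negbTE ->; by rewrite mul0r.
Qed.

Lemma natr_conj (b : bool) : (b%:R : K)^* = b%:R.
Proof. exact: conjC_nat. Qed.

Lemma natr_andb (a b : bool) : ((a && b)%:R : K) = a%:R * b%:R.
Proof. by case: a; case: b; rewrite ?mulr1 ?mulr0. Qed.

Lemma sum_trip (H S W : finType) (s0 : S) (G : (H * S * W)%type -> K) :
  \sum_x (x.1.2 == s0)%:R * G x = \sum_h \sum_w G ((h, s0), w).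
Proof.
rewrite sum_pair sum_pair; apply: eq_bigr => h _ /=.
rewrite -(sum_pick s0 (fun s => \sum_w G ((h, s), w))).
by apply: eq_bigr => s _; rewrite mulr_sumr.
Qed.

Definition MM (H S W : finType) (Q : S -> W -> op H H) (s : S) (w : W) : kop H H :=
  kmul (kadj (Phi (msqrt (Q s w)))) (Phi (msqrt (Q s w))).

Section Structure.
Variables (HA SA WA HB SB WB : finType) (N : nat) (Kp : pred (SA * SB)%type)
  (key : SA -> SB -> WB -> 'I_N)
  (QA : SA -> WA -> op HA HA) (QB : SB -> WB -> op HB HB).
Local Notation Ob := ((HA * SA * WA) * (HB * SB * WB))%type.

Definition Tk (t : (SA * SB)%type) : kop Ob (HA * HB)%type :=
  Phi (tensor (kraus QA t.1) (kraus QB t.2)).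
Definition Vk : kop ('I_N * Ob)%type Ob := Phi (@keyIso HA SA WA HB SB WB N Kp key).
Definition Ak (S : pred 'I_N) (t : (SA * SB)%type) : kop ('I_N * Ob)%type (HA * HB)%type :=
  fun ro i => (S ro.1)%:R * kmul Vk (Tk t) ro i.

Definition lab (o : Ob) : (SA * SB)%type := (o.1.1.2, o.2.1.2).
Definition keyo (o : Ob) : 'I_N := key o.1.1.2 o.2.1.2 o.2.2.

Lemma Tk_eq t o i : Tk t o i = (lab o == t)%:R *
  (Phi (msqrt (QA t.1 o.1.2)) o.1.1.1 i.1 * Phi (msqrt (QB t.2 o.2.2)) o.2.1.1 i.2).
Proof.
rewrite /Tk /Phi /tensor /kraus phi_mul /lab.
case: t => a b /=; rewrite xpair_eqE.
by case: (o.1.1.2 == a); case: (o.2.1.2 == b); rewrite /= ?mul1r ?mul0r ?mulr0 ?phi0.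
Qed.

Lemma VT_eq t ro i : kmul Vk (Tk t) ro i =
  (Kp (lab ro.2) && (ro.1 == keyo ro.2))%:R * Tk t ro.2 i.
Proof.
rewrite /kmul /Vk /Phi /keyIso.
under eq_bigr do rewrite phiCb.
rewrite (eq_bigr (fun o => (o == ro.2)%:R * ((Kp (lab ro.2))%:R * ((ro.1 == keyo ro.2)%:R * Tk t o i)))).
  by rewrite sum_pick natr_andb mulrA.
move=> o _; case: (eqVneq o ro.2) => [->|ne].
  by rewrite /= natr_andb mul1r mulrA.
by rewrite /= !mul0r.
Qed.

Lemma sum_lab t (F : Ob -> K) :
  \sum_o (lab o == t)%:R * F o =
  \sum_hA \sum_wA \sum_hB \sum_wB F (((hA, t.1), wA), ((hB, t.2), wB)).
Proof.
rewrite sum_pair.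
rewrite (eq_bigr (fun oA => (oA.1.2 == t.1)%:R *
   \sum_oB (oB.1.2 == t.2)%:R * F (oA, oB))); last first.
  move=> oA _; rewrite mulr_sumr; apply: eq_bigr => oB _.
  by case: t => a b; rewrite /lab /= xpair_eqE natr_andb mulrA.
rewrite sum_trip; apply: eq_bigr => hA _; apply: eq_bigr => wA _.
by rewrite sum_trip.
Qed.

Lemma Ak_eq S t ro i : Ak S t ro i =
  ([&& S ro.1, Kp (lab ro.2) & ro.1 == keyo ro.2])%:R * Tk t ro.2 i.
Proof. by rewrite /Ak VT_eq mulrA -natr_andb. Qed.

Definition KAA (a : SA) : kop HA HA := ksum (fun w => MM QA a w).
Definition KBB (t : (SA * SB)%type) (Sw : pred 'I_N) : kop HB HB :=
  ksum (fun w => kscale (Sw (key t.1 t.2 w))%:R (MM QB t.2 w)).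

Lemma AA1 S S' t u i i' : kmul (kadj (Ak S t)) (Ak S' u) i i' =
  \sum_o ([&& S (keyo o), S' (keyo o) & Kp (lab o)])%:R * ((Tk t o i)^* * Tk u o i').
Proof.
rewrite /kmul /kadj sum_pair exchange_big /=; apply: eq_bigr => o _.
rewrite (eq_bigr (fun r => (r == keyo o)%:R *
   (([&& S (keyo o), S' (keyo o) & Kp (lab o)])%:R * ((Tk t o i)^* * Tk u o i')))).
  by rewrite sum_pick.
move=> r _; rewrite !Ak_eq /= rmorphM rmorph_nat.
case: eqP => [->|_]; last by rewrite !andbF !mul0r.
case: (S (keyo o)); case: (S' (keyo o)); case: (Kp (lab o));
  by rewrite /= ?mul1r ?mul0r ?mulr0.
Qed.

Lemma AA S S' t u i i' : kmul (kadj (Ak S t)) (Ak S' u) i i' =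
  (t == u)%:R * ((Kp t)%:R * (KAA t.1 i.1 i'.1 * KBB t (fun r => S r && S' r) i.2 i'.2)).
Proof.
rewrite AA1; case: (eqVneq t u) => [<-|ne]; last first.
  rewrite mul0r big1 // => o _; rewrite !Tk_eq.
  case: (eqVneq (lab o) t) => [e|_]; last by rewrite /= mul0r rmorph0 mul0r mulr0.
  by rewrite e (negbTE ne) /= mul0r mulr0 mulr0.
rewrite mul1r.
rewrite (eq_bigr (fun o => (lab o == t)%:R * (([&& S (keyo o), S' (keyo o) & Kp (lab o)])%:R *
   ((Phi (msqrt (QA t.1 o.1.2)) o.1.1.1 i.1 * Phi (msqrt (QB t.2 o.2.2)) o.2.1.1 i.2)^* *
    (Phi (msqrt (QA t.1 o.1.2)) o.1.1.1 i'.1 * Phi (msqrt (QB t.2 o.2.2)) o.2.1.1 i'.2))))); last first.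
  move=> o _; rewrite !Tk_eq rmorphM rmorph_nat.
  by case: (lab o == t); rewrite /= ?mul1r ?mul0r ?mulr0.
rewrite sum_lab /KAA /KBB /ksum /MM /kmul /kscale /kadj.
rewrite [X in _ * (X * _)]exchange_big /= mulr_suml mulr_sumr; apply: eq_bigr => hA _.
rewrite mulr_suml mulr_sumr; apply: eq_bigr => wA _.
rewrite exchange_big /= mulr_sumr mulr_sumr; apply: eq_bigr => wB _.
rewrite mulr_sumr mulr_sumr mulr_sumr; apply: eq_bigr => hB _.
rewrite /keyo /lab /= !natr_andb rmorphM.
case: t => a b /=; ring.
Qed.

End Structure.

Lemma kmul0 (I J L : finType) (A : kop I J) : kmul A (@kzero J L) = @kzero I L.
Proof. by apply: kopP => i k; rewrite /kmul big1 // => j _; rewrite mulr0. Qed.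
Lemma kmul0l (I J L : finType) (A : kop J L) : kmul (@kzero I J) A = @kzero I L.
Proof. by apply: kopP => i k; rewrite /kmul big1 // => j _; rewrite mul0r. Qed.

Lemma ksum_single (T I J : finType) (F : T -> kop I J) t :
  (forall u, u != t -> F u = @kzero I J) -> ksum F = F t.
Proof.
move=> H; apply: kopP => i j; rewrite /ksum (bigD1 t) //= big1 ?addr0 //.
by move=> u /H ->.
Qed.

Lemma kpow_comm (I : finType) (Y : kop I I) n : kmul Y (kpow Y n) = kpow Y n.+1.
Proof.
elim: n => [|n IH] /=; first by rewrite kmul1 kmul1l.
by rewrite -kmulA IH.
Qed.

Lemma kpow_orth (I J T : finType) (A : T -> kop I J) (X : kop J J) n :
  (forall t u, t != u -> kmul (kadj (A t)) (A u) = @kzero J J) ->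
  kpow (ksum (fun t => kconj (A t) X)) n.+1 =
  ksum (fun t => kmul (kmul (A t) (kmul (kpow (kmul X (kmul (kadj (A t)) (A t))) n) X)) (kadj (A t))).
Proof.
move=> Horth; elim: n => [|n IH].
  by rewrite /= kmul1l; congr ksum; apply: functional_extensionality => t; rewrite kmul1l.
rewrite (_ : kpow _ n.+2 = kmul (kpow (ksum (fun t => kconj (A t) X)) n.+1) (ksum (fun t => kconj (A t) X))) //.
rewrite IH kmul_suml; congr ksum; apply: functional_extensionality => t.
rewrite kmul_sumr (@ksum_single _ _ _ _ t).
  by rewrite /kconj /= !kmulA.
move=> u ne; rewrite /kconj !kmulA -(kmulA (kadj (A t)) (A u)) (Horth t u); last by apply/eqP => e; move: ne; rewrite e eqxx.
by rewrite kmul0l !kmul0.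
Qed.

Lemma ktr_pow_orth (I J T : finType) (A : T -> kop I J) (X : kop J J) n :
  (forall t u, t != u -> kmul (kadj (A t)) (A u) = @kzero J J) ->
  ktr (kpow (ksum (fun t => kconj (A t) X)) n.+1) =
  \sum_t ktr (kpow (kmul X (kmul (kadj (A t)) (A t))) n.+1).
Proof.
move=> Horth; rewrite kpow_orth // ktr_sum; apply: eq_bigr => t _.
rewrite [LHS]ktrC -[kmul (kadj (A t)) (kmul (A t) _)]kmulA [LHS]ktrC /=.
by rewrite kmulA.
Qed.

Lemma kadj_orth_sum (I J T : finType) (A : T -> kop I J) (X : kop J J) :
  kadj X = X -> kadj (ksum (fun t => kconj (A t) X)) = ksum (fun t => kconj (A t) X).
Proof.
move=> HX; rewrite kadj_sum; congr ksum; apply: functional_extensionality => t.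
by rewrite kadj_conj HX.
Qed.

Definition kscaleC (I J : finType) (c : K) (A : kop I J) := kscale c A.

Lemma ktr_poly (I : finType) (p : {poly R}) (Y : kop I I) :
  ktr (kmul Y (kpoly p Y)) = \sum_(k < size p) (p`_k)%:C%C * ktr (kpow Y k.+1).
Proof.
rewrite /kpoly kmul_sumr ktr_sum; apply: eq_bigr => k _.
rewrite -kpow_comm /ktr mulr_sumr; apply: eq_bigr => i _.
rewrite /kmul /kscale mulr_sumr; apply: eq_bigr => j _; ring.
Qed.

Definition kZ (N : nat) (O : finType) (Y : kop ('I_N * O)%type ('I_N * O)%type) :
  kop ('I_N * O)%type ('I_N * O)%type := fun r r' => if r.1 == r'.1 then Y r r' else 0.
Definition bdiag (N : nat) (O : finType) (B : kop ('I_N * O)%type ('I_N * O)%type) :=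
  forall r r', r.1 != r'.1 -> B r r' = 0.

Lemma ktr_kZ (N : nat) (O : finType) (Y B : kop ('I_N * O)%type ('I_N * O)%type) :
  bdiag B -> ktr (kmul Y B) = ktr (kmul (kZ Y) B).
Proof.
move=> HB; rewrite /ktr /kmul /kZ; apply: eq_bigr => r _; apply: eq_bigr => r' _.
case: eqP => // /eqP ne; rewrite HB ?mulr0 // eq_sym //.
Qed.

Lemma bdiag_mul (N : nat) (O : finType) (A B : kop ('I_N * O)%type ('I_N * O)%type) :
  bdiag A -> bdiag B -> bdiag (kmul A B).
Proof.
move=> HA HB r r' ne; rewrite /kmul big1 // => s _.
case: (eqVneq r.1 s.1) => [e|n1]; last by rewrite HA ?mul0r.
by rewrite HB ?mulr0 // -e.
Qed.

Lemma bdiag_pow (N : nat) (O : finType) (A : kop ('I_N * O)%type ('I_N * O)%type) n :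
  bdiag A -> bdiag (kpow A n).
Proof.
move=> HA; elim: n => [|n IH] /=; last exact: bdiag_mul.
move=> r r' ne; rewrite /kid; case: eqP => // e; by rewrite e eqxx in ne.
Qed.

Lemma bdiag_poly (N : nat) (O : finType) (p : {poly R}) (A : kop ('I_N * O)%type ('I_N * O)%type) :
  bdiag A -> bdiag (kpoly p A).
Proof.
move=> HA r r' ne; rewrite /kpoly /ksum big1 // => k _.
by rewrite /kscale bdiag_pow ?mulr0.
Qed.

Lemma bdiag_kZ (N : nat) (O : finType) (Y : kop ('I_N * O)%type ('I_N * O)%type) : bdiag (kZ Y).
Proof. by move=> r r' /negbTE ne; rewrite /kZ ne. Qed.

Lemma sum_scal (I : finType) (c : K) (M Y : I -> K) :
  \sum_l (c * M l) * Y l = c * \sum_l M l * Y l.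
Proof. by rewrite mulr_sumr; apply: eq_bigr => l _; rewrite mulrA. Qed.

Section Decomp.
Variables (HA SA WA HB SB WB : finType) (N : nat) (Kp : pred (SA * SB)%type)
  (key : SA -> SB -> WB -> 'I_N)
  (QA : SA -> WA -> op HA HA) (QB : SB -> WB -> op HB HB).
Local Notation Ob := ((HA * SA * WA) * (HB * SB * WB))%type.
Local Notation A := (Ak Kp key QA QB).

Lemma VPi : kmul (Vk Kp key) (Phi (@siftProj HA SA WA HB SB WB Kp)) = Vk Kp key.
Proof.
apply: kopP => ro o'; rewrite /kmul /siftProj.
under eq_bigr do rewrite /Phi phiCb natr_andb mulrCA.
rewrite (eq_bigr (fun o => (o == o')%:R * (Vk Kp key ro o * (Kp (o'.1.1.2, o'.2.1.2))%:R))).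
  rewrite sum_pick /Vk /Phi /keyIso phiCb.
  by case: (Kp (o'.1.1.2, o'.2.1.2)); rewrite ?mulr1 ?mulr0 //= andbF.
by move=> o _; case: eqP => [->|]; rewrite ?mul0r.
Qed.

Lemma G_decomp (rho : op (HA * HB)%type (HA * HB)%type) :
  Phi (Gmap QA QB Kp key rho) = ksum (fun t => kconj (A predT t) (Phi rho)).
Proof.
rewrite /Gmap !Phi_conj /annMap Phi_sum.
rewrite (_ : ksum _ = ksum (fun t => kconj (Tk QA QB t) (Phi rho))); last first.
  by f_equal; apply: functional_extensionality => t; rewrite Phi_conj.
rewrite (kconj_sum (Phi (siftProj Kp))) (kconj_sum (Phi (keyIso Kp key))).
apply: kopP => i j; rewrite /ksum; apply: eq_bigr => t _.
rewrite !kconj_conj VPi; congr (kconj _ _ i j).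
by apply: kopP => ro i'; rewrite /Ak /= mul1r.
Qed.

Lemma kconj_Ak S t (X : kop (HA * HB)%type (HA * HB)%type) r r' :
  kconj (A S t) X r r' = (S r.1)%:R * (S r'.1)%:R * kconj (A predT t) X r r'.
Proof.
rewrite /kconj /kmul /kadj /Ak /= mulr_sumr; apply: eq_bigr => k _.
rewrite rmorphM rmorph_nat /= !rmorph1 !mul1r.
under eq_bigr do rewrite -mulrA.
under [X in _ = _ * (X * _)]eq_bigr do rewrite mul1r.
rewrite -mulr_sumr; ring.
Qed.

Lemma Phi_Zmap (O : finType) (Y : op ('I_N * O)%type ('I_N * O)%type) :
  Phi (Zmap Y) = kZ (Phi Y).
Proof. by apply: kopP => r r'; rewrite /Phi /Zmap /kZ; case: eqP. Qed.

Lemma Z_decomp (rho : op (HA * HB)%type (HA * HB)%type) :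
  Phi (Zmap (Gmap QA QB Kp key rho)) =
  ksum (fun jt : ('I_N * (SA * SB))%type => kconj (A (pred1 jt.1) jt.2) (Phi rho)).
Proof.
rewrite Phi_Zmap G_decomp; apply: kopP => r r'; rewrite /kZ /ksum [RHS]sum_pair.
under [RHS]eq_bigr do under eq_bigr do rewrite kconj_Ak /=.
under [RHS]eq_bigr do rewrite -mulr_sumr.
rewrite [RHS](eq_bigr (fun j => (j == r.1)%:R * ((r'.1 == r.1)%:R *
   \sum_t kconj (A predT t) (Phi rho) r r'))).
  by rewrite sum_pick eq_sym; case: (r'.1 == r.1); rewrite ?mul1r ?mul0r.
move=> j _; case: (eqVneq r.1 j) => [e|ne]; first by rewrite -?e ?eqxx ?mul1r.
by rewrite !mul0r.
Qed.
End Decomp.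

Definition nonnegK (z : K) := complex.Im z = 0 /\ 0 <= complex.Re z.

Lemma nonnegK_sum (T : Type) (r : seq T) (P : pred T) (F : T -> K) :
  (forall t, P t -> nonnegK (F t)) -> nonnegK (\sum_(t <- r | P t) F t).
Proof.
move=> H; apply: (big_ind nonnegK) => //.
move=> [a b] [c d] [/= e1 e2] [/= e3 e4]; split => /=; lra.
Qed.

Lemma psd_from_kq (I : finType) (A : op I I) :
  (forall w, nonnegK (kq (Phi A) w)) -> psd A.
Proof.
move=> H v /=; have [h1 h2] := H (fun i => phi (v i)).
suff E : phi (\big[Cadd/Defs.C0]_i \big[Cadd/Defs.C0]_j
     Cmul (Cconj (v i)) (Cmul (A i j) (v j))) = kq (Phi A) (fun i => phi (v i)).
  by move: h1 h2; rewrite -E => h1 h2; split => //; apply/RleP.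
rewrite phi_big /kq; apply: eq_bigr => i _; rewrite phi_big; apply: eq_bigr => j _.
by rewrite !phi_mul phi_conj.
Qed.

Lemma kq_sum (I T : finType) (P : pred T) (F : T -> kop I I) w :
  kq (fun i j => \sum_(t | P t) F t i j) w = \sum_(t | P t) kq (F t) w.
Proof.
rewrite /kq.
under eq_bigr do under eq_bigr do rewrite mulr_suml mulr_sumr.
under eq_bigr do rewrite exchange_big.
by rewrite exchange_big.
Qed.

Lemma psd_coarse (Y SB Cs HB : finType) (nB : nat) (fB : SB -> 'I_nB -> Y)
  (PB : Y -> op HB HB) (c : Y -> Cs) b k :
  (forall y, psd (PB y)) -> psd (coarse fB PB c b k).
Proof.
move=> H; apply: psd_from_kq => w.
rewrite (_ : Phi _ = fun i j => \sum_(y | (y \in block fB b) && (c y == k)) Phi (PB y) i j).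
  rewrite kq_sum; apply: nonnegK_sum => y _.
  have [h1 h2] := psdK (H y) w; by split.
by apply: kopP => i j; rewrite /Phi /coarse phi_big.
Qed.

Lemma mlog2_poly (I : finType) (X : op I I) : kadj (Phi X) = Phi X ->
  exists s : seq R, forall p : {poly R}, (forall x, x \in s -> p.[x] = Rlog2 x) ->
  Phi (mlog2 X) = kpoly p (Phi X).
Proof.
move=> HX; have [U [d [HU [HXd HS]]]] := fcalc_spec Rlog2 HX.
exists [seq d i | i <- enum I] => p Hp.
rewrite /mlog2 HS HXd; apply: fcalc_poly => // i.
by apply: Hp; apply: map_f; rewrite mem_enum.
Qed.

Lemma KBB_eq (Y SA SB HB Cs : finType) (wB N : nat) (PB : Y -> op HB HB)
  (fB : SB -> 'I_wB -> Y) (g : SA -> SB -> Y -> 'I_N) (c : Y -> Cs)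
  (h : SA -> SB -> Cs -> 'I_N) (t : (SA * SB)%type) (Sw : pred 'I_N) :
  (forall y, psd (PB y)) -> injective (fB t.2) ->
  (forall y, y \in block fB t.2 -> g t.1 t.2 y = h t.1 t.2 (c y)) ->
  KBB (fun a b be => g a b (fB b be)) (fun b be => PB (fB b be)) t Sw =
  KBB h (fun b k => coarse fB PB c b k) t Sw.
Proof.
move=> HP inj Hg; apply: kopP => i i'; rewrite /KBB /ksum /kscale /MM /=.
under eq_bigr => w _ do rewrite (msqrt_sq (HP _)).
under [RHS]eq_bigr => k _ do rewrite (msqrt_sq (psd_coarse _ _ _ _ HP)).
set F := fun y => (Sw (h t.1 t.2 (c y)))%:R * Phi (PB y) i i'.
transitivity (\sum_(y in block fB t.2) F y).
  rewrite /block big_imset /=; last by move=> x y _ _; apply: inj.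
  apply: eq_big => // w; rewrite /F Hg //.
  by apply: imset_f.
rewrite (partition_big c predT) //; apply: eq_bigr => k _.
rewrite /Phi /coarse phi_big mulr_sumr; apply: eq_bigr => y /andP [_ /eqP <-].
by [].
Qed.

Section Inst.
Variables (HA SA WA HB SB WB : finType) (N : nat) (Kp : pred (SA * SB)%type)
  (key : SA -> SB -> WB -> 'I_N)
  (QA : SA -> WA -> op HA HA) (QB : SB -> WB -> op HB HB).
Local Notation A := (Ak Kp key QA QB).

Lemma orth_T t u : t != u -> kmul (kadj (A predT t)) (A predT u) = @kzero _ _.
Proof. by move=> ne; apply: kopP => i i'; rewrite AA (negbTE ne) mul0r. Qed.

Lemma orth_Z (jt ju : ('I_N * (SA * SB))%type) : jt != ju ->
  kmul (kadj (A (pred1 jt.1) jt.2)) (A (pred1 ju.1) ju.2) = @kzero _ _.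
Proof.
move=> ne; apply: kopP => i i'; rewrite AA.
case: (eqVneq jt.2 ju.2) => [e|ne2]; last by rewrite mul0r.
have ne1 : jt.1 != ju.1.
  by apply: contra ne => /eqP e1; move: e1 e; case: jt; case: ju => /= ? ? ? ? -> ->.
rewrite /KBB /ksum big1 ?mulr0 // => w _; rewrite /kscale /=.
case: (eqVneq (key jt.2.1 jt.2.2 w) jt.1) => [->|]; last by rewrite mul0r.
by rewrite /= (negbTE ne1) mul0r.
Qed.

Lemma herm_G (rho : op (HA * HB)%type (HA * HB)%type) : kadj (Phi rho) = Phi rho ->
  kadj (Phi (Gmap QA QB Kp key rho)) = Phi (Gmap QA QB Kp key rho).
Proof. by move=> Hr; rewrite G_decomp; apply: kadj_orth_sum. Qed.

Lemma herm_Z (rho : op (HA * HB)%type (HA * HB)%type) : kadj (Phi rho) = Phi rho ->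
  kadj (Phi (Zmap (Gmap QA QB Kp key rho))) = Phi (Zmap (Gmap QA QB Kp key rho)).
Proof. by move=> Hr; rewrite Z_decomp; apply: kadj_orth_sum. Qed.

Lemma trace_G (rho : op (HA * HB)%type (HA * HB)%type) n :
  ktr (kpow (Phi (Gmap QA QB Kp key rho)) n.+1) =
  \sum_t ktr (kpow (kmul (Phi rho) (kmul (kadj (A predT t)) (A predT t))) n.+1).
Proof. by rewrite G_decomp; apply: ktr_pow_orth => t u; apply: orth_T. Qed.

Lemma trace_Z (rho : op (HA * HB)%type (HA * HB)%type) n :
  ktr (kpow (Phi (Zmap (Gmap QA QB Kp key rho))) n.+1) =
  \sum_(jt : ('I_N * (SA * SB))%type)
     ktr (kpow (kmul (Phi rho) (kmul (kadj (A (pred1 jt.1) jt.2)) (A (pred1 jt.1) jt.2))) n.+1).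
Proof. by rewrite Z_decomp; apply: ktr_pow_orth => t u; apply: orth_Z. Qed.
End Inst.

Lemma term1 (I : finType) (X : op I I) (p : {poly R}) :
  Phi (mlog2 X) = kpoly p (Phi X) ->
  phi (tr (opmul X (mlog2 X))) = \sum_(k < size p) (p`_k)%:C%C * ktr (kpow (Phi X) k.+1).
Proof. by move=> H; rewrite phi_tr Phi_mul H ktr_poly. Qed.

Lemma term2 (N : nat) (O : finType) (X : op ('I_N * O)%type ('I_N * O)%type) (p : {poly R}) :
  Phi (mlog2 (Zmap X)) = kpoly p (Phi (Zmap X)) ->
  phi (tr (opmul X (mlog2 (Zmap X)))) =
  \sum_(k < size p) (p`_k)%:C%C * ktr (kpow (Phi (Zmap X)) k.+1).
Proof.
move=> H; rewrite phi_tr Phi_mul H Phi_Zmap ktr_kZ; last exact/bdiag_poly/bdiag_kZ.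
by rewrite ktr_poly.
Qed.

End Helpers.
Import Helpers.

Import GRing.Theory Num.Theory.

Theorem mainTheorem3
  (HA HB : finType)                      (* orthonormal-basis index sets of H_A, H_B *)
  (X Y : finType)                        (* outcome sets of Alice's / Bob's POVMs *)
  (PA : X -> op HA HA) (PB : Y -> op HB HB)
  (SA SB : finType)                      (* announcement sets S^A, S^B *)
  (wA wB : nat)                          (* omega_A, omega_B *)
  (fA : SA -> 'I_wA -> X) (fB : SB -> 'I_wB -> Y)
  (N : nat) (Kp : pred (SA * SB)%type)   (* the kept set K *)
  (g : SA -> SB -> Y -> 'I_N)            (* key map (relevant on K x Y) *)
  (Cs : finType) (c : Y -> Cs) (h : SA -> SB -> Cs -> 'I_N)
  (rho : op (HA * HB)%type (HA * HB)%type) :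
  povm PA -> povm PB ->
  (* {X_a = f_a(Omega^A)} is a partition of X and each f_a is a bijection *)
  bijective (fun p : (SA * 'I_wA)%type => fA p.1 p.2) ->
  bijective (fun p : (SB * 'I_wB)%type => fB p.1 p.2) ->
  (forall a b, Kp (a, b) -> forall y, y \in block fB b -> g a b y = h a b (c y)) ->
  density rho ->
  let G := Gmap (fun a al => PA (fA a al)) (fun b be => PB (fB b be)) Kp
                (fun a b be => g a b (fB b be)) rho in
  let Ghat := Gmap (fun a al => PA (fA a al)) (fun b k => coarse fB PB c b k) Kp
                   h rho in
  relent G (Zmap G) = relent Ghat (Zmap Ghat).
Proof.
move=> _ [PBpsd _] _ [fBi fBK _] Hg [rhopsd _] G Ghat.
have Hr := psd_herm rhopsd.
have inj : forall b, injective (fB b).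
  by move=> b x y E; have := @can_inj _ _ _ _ fBK (b, x) (b, y) E => -[].
have QEQ : forall S S' t u,
  kmul (kadj (Ak Kp (fun a b be => g a b (fB b be)) (fun a al => PA (fA a al))
                 (fun b be => PB (fB b be)) S t))
       (Ak Kp (fun a b be => g a b (fB b be)) (fun a al => PA (fA a al))
                 (fun b be => PB (fB b be)) S' u) =
  kmul (kadj (Ak Kp h (fun a al => PA (fA a al)) (fun b k => coarse fB PB c b k) S t))
       (Ak Kp h (fun a al => PA (fA a al)) (fun b k => coarse fB PB c b k) S' u).
  move=> S S' t u; apply: kopP => i i'; rewrite !AA.
  case Kt: (Kp t); last by rewrite !mul0r !mulr0.
  rewrite (@KBB_eq _ _ _ _ _ _ _ PB fB g c h) //.
  all: try exact: inj.
  move=> y yb; have Kt2 : Kp (t.1, t.2) by rewrite -surjective_pairing.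
  exact: (Hg t.1 t.2 Kt2 y yb).
have [s1 H1] := mlog2_poly (herm_G Kp (fun a b be => g a b (fB b be)) (fun a al => PA (fA a al)) (fun b be => PB (fB b be)) Hr).
have [s2 H2] := mlog2_poly (herm_Z Kp (fun a b be => g a b (fB b be)) (fun a al => PA (fA a al)) (fun b be => PB (fB b be)) Hr).
have [s3 H3] := mlog2_poly (herm_G Kp h (fun a al => PA (fA a al)) (fun b k => coarse fB PB c b k) Hr).
have [s4 H4] := mlog2_poly (herm_Z Kp h (fun a al => PA (fA a al)) (fun b k => coarse fB PB c b k) Hr).
have [p Hp] := interp (s1 ++ s2 ++ s3 ++ s4) Rlog2.
have E1 : phi (tr (opmul G (mlog2 G))) = phi (tr (opmul Ghat (mlog2 Ghat))).
  rewrite (term1 (H1 p _)); last by move=> x xs; apply: Hp; rewrite !mem_cat xs.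
  rewrite (term1 (H3 p _)); last by move=> x xs; apply: Hp; rewrite !mem_cat xs !orbT.
  apply: eq_bigr => k _; congr (_ * _)%R.
  rewrite /G /Ghat !trace_G; apply: eq_bigr => t _; by rewrite QEQ.
have E2 : phi (tr (opmul G (mlog2 (Zmap G)))) = phi (tr (opmul Ghat (mlog2 (Zmap Ghat)))).
  rewrite (term2 (H2 p _)); last by move=> x xs; apply: Hp; rewrite !mem_cat xs !orbT.
  rewrite (term2 (H4 p _)); last by move=> x xs; apply: Hp; rewrite !mem_cat xs !orbT.
  apply: eq_bigr => k _; congr (_ * _)%R.
  rewrite /G /Ghat !trace_Z; apply: eq_bigr => t _; by rewrite QEQ.
have R1 : Cre (tr (opmul G (mlog2 G))) = Cre (tr (opmul Ghat (mlog2 Ghat))) :=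
  congr1 (@complex.Re _) E1.
have R2 : Cre (tr (opmul G (mlog2 (Zmap G)))) = Cre (tr (opmul Ghat (mlog2 (Zmap Ghat)))) :=
  congr1 (@complex.Re _) E2.
by rewrite /relent R1 R2.
Qed.
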